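(* Let $\mathcal A_+,\mathcal A_-\subseteq\mathbb R^n$ be disjoint finite sets such that $(\mathcal A_+,\mathcal A_-)$ is nonseparable of dimension $d$, let $D\in\mathcal F_d(\mathcal A_+)$ with $\mathcal A_-\subseteq D$, write $\Lambda(\mathcal A_+,D)=\{\Delta_1,\dots,\Delta_r\}$ and fix $j\in[r]$. Then for each $a\in\mathcal A_+\setminus\operatorname{vertices}(\Delta_j)$ there is a unique facet $\Gamma_a$ of $\Delta_j$ such that $\operatorname{conv}(\Gamma_a\cup\{a\})\in\Lambda(\mathcal A_+,D)$. Consequently the map $\varphi_j:\mathcal A_+\setminus\operatorname{vertices}(\Delta_j)\to[r]\setminus\{j\}$, $a\mapsto\varphi_j(a)$ where $\Delta_{\varphi_j(a)}=\operatorname{conv}(\Gamma_a\cup\{a\})$, is well defined and injective.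
   Context: For disjoint finite sets $\mathcal A_+,\mathcal A_-\subseteq\mathbb R^n$, the dimension of $(\mathcal A_+,\mathcal A_-)$ is $\dim\operatorname{conv}(\mathcal A_+\cup\mathcal A_-)$; let $d$ be this dimension. $\mathcal F(\mathcal A_+)$ is the common refinement of all regular polyhedral subdivisions of the point configuration $\mathcal A_+$, and $\mathcal F_d(\mathcal A_+)$ its $d$-dimensional cells. $(\mathcal A_+,\mathcal A_-)$ is nonseparable if $\mathcal A_-\subseteq\operatorname{relint}(\operatorname{conv}(\mathcal A_+))$ and there is $D\in\mathcal F_d(\mathcal A_+)$ with $\mathcal A_-\subseteq D$. $\Lambda(\mathcal A_+,D)$ is the set of $d$-dimensional simplices $\Delta$ with vertices in $\mathcal A_+$ such that $\operatorname{relint}(D)\subseteq\operatorname{relint}(\Delta)$. $[r]=\{1,\dots,r\}$. *)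

(* Defs.v *)
From mathcomp Require Import all_boot all_order all_algebra.
From mathcomp Require Import boolp classical_sets reals.
Set Implicit Arguments. Unset Strict Implicit. Unset Printing Implicit Defensive.
Import Order.TTheory GRing.Theory Num.Theory.
Local Open Scope ring_scope.
Local Open Scope classical_set_scope.

Section Defs.
Variables (R : realType) (n : nat).
Notation pt := ('rV[R]_n).

Definition pts (s : seq pt) : set pt := [set x | x \in s].

Definition conv (S : set pt) : set pt :=
  [set x | exists k (p : 'I_k -> pt) (w : 'I_k -> R),
     (forall i, S (p i)) /\ (forall i, 0 <= w i) /\
     \sum_(i < k) w i = 1 /\ x = \sum_(i < k) w i *: p i].

Definition aff (S : set pt) : set pt :=
  [set x | exists k (p : 'I_k -> pt) (w : 'I_k -> R),
     (forall i, S (p i)) /\ \sum_(i < k) w i = 1 /\ x = \sum_(i < k) w i *: p i].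

Definition affindep k (p : 'I_k.+1 -> pt) : bool :=
  \rank (\matrix_(i < k, j < n) (p (lift ord0 i) - p ord0) ord0 j) == k.

Definition affdim_ge (S : set pt) (k : nat) : Prop :=
  exists p : 'I_k.+1 -> pt, (forall i, S (p i)) /\ affindep p.

Definition affdim (S : set pt) (k : nat) : Prop :=
  affdim_ge S k /\ ~ affdim_ge S k.+1.

Definition relint (S : set pt) : set pt :=
  [set x | S x /\ exists e : R, 0 < e /\
     forall y, aff S y -> (forall i, `|y ord0 i - x ord0 i| < e) -> S y].

Definition dotv (c y : pt) : R := \sum_(i < n) c ord0 i * y ord0 i.

Definition face (P F : set pt) : Prop :=
  exists (c : pt) (b : R), (forall y, P y -> dotv c y <= b) /\
    F = P `&` [set y | dotv c y = b].

Definition vertex (P : set pt) (v : pt) : Prop := face P [set v].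

Definition facet (P G : set pt) : Prop :=
  face P G /\ exists k, affdim P k.+1 /\ affdim G k.

(* cells of the regular subdivision of the point configuration Ap induced by
   the height function w: projections of lower faces of the lifted points *)
Definition regular_cell (Ap : seq pt) (w : pt -> R) (K : set pt) : Prop :=
  exists (c : pt) (b : R),
    (forall a, a \in Ap -> dotv c a + b <= w a) /\
    (exists a, a \in Ap /\ dotv c a + b = w a) /\
    K = conv [set a | a \in Ap /\ dotv c a + b = w a].

(* cells of F(Ap): nonempty intersections of one cell from every regular
   subdivision (common refinement of all regular subdivisions) *)
Definition refinement_cell (Ap : seq pt) (K : set pt) : Prop :=
  K !=set0 /\ exists sigma : (pt -> R) -> set pt,
    (forall w, regular_cell Ap w (sigma w)) /\
    K = [set x | forall w, sigma w x].

Definition cellFd (Ap : seq pt) (d : nat) (D : set pt) : Prop :=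
  refinement_cell Ap D /\ affdim D d.

Definition Lambda (Ap : seq pt) (d : nat) (D : set pt) (Delta : set pt) : Prop :=
  exists V : 'I_d.+1 -> pt, (forall i, V i \in Ap) /\ affindep V /\
    Delta = conv (range V) /\ relint D `<=` relint Delta.

Definition nonseparable (Ap Am : seq pt) : Prop :=
  exists d, affdim (conv (pts (Ap ++ Am))) d /\
    pts Am `<=` relint (conv (pts Ap)) /\
    exists D, cellFd Ap d D /\ pts Am `<=` D.

End Defs.

(* Main.v *)
Require Import Defs.
From mathcomp Require Import all_boot all_order all_algebra.
From mathcomp Require Import boolp classical_sets reals.
From mathcomp Require Import ring lra.
Set Implicit Arguments. Unset Strict Implicit. Unset Printing Implicit Defensive.
Import Order.TTheory GRing.Theory Num.Theory.
Local Open Scope ring_scope.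
Local Open Scope classical_set_scope.

Section Aux.
Variables (R : realType) (n : nat).
Notation pt := ('rV[R]_n).

Definition convexS (C : set pt) := forall (u v : pt) (s : R),
  C u -> C v -> 0 <= s -> s <= 1 -> C ((1 - s) *: u + s *: v).

Lemma conv_sub (S : set pt) x : S x -> conv S x.
Proof.
move=> Sx; exists 1%N, (fun _ => x), (fun _ => 1); split=> //; split; first by [].
split; first by rewrite big_ord1.
by rewrite big_ord1 scale1r.
Qed.

Lemma conv_mono (S T : set pt) : S `<=` T -> conv S `<=` conv T.
Proof.
move=> ST x [k [p [w [Sp [w0 [w1 ->]]]]]].
by exists k, p, w; split=> // i; apply: ST.
Qed.

Lemma split_lsh m k (i : 'I_m) : split (lshift k i) = inl i.
Proof. exact: (unsplitK (inl i)). Qed.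
Lemma split_rsh m k (i : 'I_k) : split (rshift m i) = inr i.
Proof. exact: (unsplitK (inr i)). Qed.

Lemma conv_convex (S : set pt) : convexS (conv S).
Proof.
move=> u v s [k1 [p1 [w1 [Sp1 [w10 [w11 ->]]]]]] [k2 [p2 [w2 [Sp2 [w20 [w21 ->]]]]]] s0 s1.
exists (k1 + k2)%N.
exists (fun i => match split i with inl a => p1 a | inr b => p2 b end).
exists (fun i => match split i with inl a => (1 - s) * w1 a | inr b => s * w2 b end).
split; [|split; [|split]].
- by move=> i; case: split.
- by move=> i; case: split => a; apply: mulr_ge0 => //; rewrite subr_ge0.
- rewrite big_split_ord /=.
  under eq_bigr do rewrite split_lsh.
  under [X in _ + X]eq_bigr do rewrite split_rsh.
  by rewrite -!mulr_sumr w11 w21 !mulr1 subrK.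
- rewrite big_split_ord /=.
  under [X in _ = X + _]eq_bigr do rewrite split_lsh.
  under [X in _ = _ + X]eq_bigr do rewrite split_rsh.
  rewrite !scaler_sumr; congr (_ + _); apply: eq_bigr => i _; by rewrite scalerA.
Qed.

Lemma hull (S C : set pt) : convexS C -> S `<=` C -> conv S `<=` C.
Proof.
move=> cC SC x [k [p [w [Sp [w0 [w1 ->]]]]]].
elim: k p w Sp w0 w1 => [|k IH] p w Sp w0 w1.
  by move: w1; rewrite big_ord0 => /eqP; rewrite eq_sym oner_eq0.
rewrite big_ord_recl; rewrite big_ord_recl in w1.
set s := \sum_(i < k) w (lift ord0 i).
have s0 : 0 <= s by apply: sumr_ge0 => i _.
have ws : w ord0 = 1 - s by rewrite -w1 addrK.
have [s_eq0|s_neq0] := eqVneq s 0.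
  have wz : forall i, w (lift ord0 i) = 0.
    move=> i; move/eqP: s_eq0; rewrite psumr_eq0 // => /allP H.
    by apply/eqP; apply: (H i); rewrite mem_index_enum.
  rewrite big1 ?addr0; last by move=> i _; rewrite wz scale0r.
  by rewrite ws s_eq0 subr0 scale1r; apply: SC.
have sgt0 : 0 < s by rewrite lt_def s_neq0.
have -> : \sum_(i < k) w (lift ord0 i) *: p (lift ord0 i) =
   s *: \sum_(i < k) (w (lift ord0 i) / s) *: p (lift ord0 i).
  rewrite scaler_sumr; apply: eq_bigr => i _; rewrite scalerA.
  by rewrite mulrCA mulfV // mulr1.
rewrite ws; apply: cC => //; first exact: SC.
- apply: (IH (fun i => p (lift ord0 i)) (fun i => w (lift ord0 i) / s)).
  + by move=> i; apply: Sp.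
  + by move=> i; apply: divr_ge0.
  + by rewrite -mulr_suml mulfV.
- by rewrite -(subrK s 1) lerDr -ws.
Qed.


Definition bary k (U : 'I_k -> pt) (b : 'I_k -> R) : pt := \sum_(i < k) b i *: U i.

Lemma conv_range k (U : 'I_k -> pt) x : conv (range U) x <->
  exists b : 'I_k -> R, (forall i, 0 <= b i) /\ \sum_i b i = 1 /\ x = bary U b.
Proof.
split; last first.
  move=> [b [b0 [b1 ->]]]; exists k, U, b; split=> //; by move=> i; exists i.
move: x; apply: (@hull _ (fun x => exists b : 'I_k -> R,
   (forall i, 0 <= b i) /\ \sum_i b i = 1 /\ x = bary U b)).
  move=> u v s [b [b0 [b1 ->]]] [b' [b0' [b1' ->]]] s0 s1.
  exists (fun i => (1 - s) * b i + s * b' i); split; [|split].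
  - by move=> i; apply: addr_ge0; apply: mulr_ge0 => //; rewrite subr_ge0.
  - by rewrite big_split /= -!mulr_sumr b1 b1' !mulr1 subrK.
  - rewrite /bary !scaler_sumr -big_split; apply: eq_bigr => i _ /=.
    by rewrite scalerA scalerA -scalerDl.
move=> _ [i _ <-]; exists (fun l => (l == i)%:R); split; [|split].
- by move=> l; rewrite ler0n.
- by rewrite (bigD1 i) //= eqxx big1 ?addr0 // => l /negbTE ->.
- rewrite /bary (bigD1 i) //= eqxx scale1r big1 ?addr0 //.
  by move=> l /negbTE ->; rewrite scale0r.
Qed.

Definition affc k (U : 'I_k -> pt) (x : pt) : Prop :=
  exists b : 'I_k -> R, \sum_i b i = 1 /\ x = bary U b.

Lemma aff_affc k (U : 'I_k -> pt) (S : set pt) : S `<=` affc U -> aff S `<=` affc U.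
Proof.
move=> SU x [m [p [w [Sp [w1 ->]]]]].
have /choice [f Hf] : forall i : 'I_m, exists b : 'I_k -> R,
    \sum_l b l = 1 /\ p i = bary U b by move=> i; apply: SU.
exists (fun l => \sum_(i < m) w i * f i l); split.
  rewrite exchange_big /=; rewrite -w1; apply: eq_bigr => i _.
  by rewrite -mulr_sumr (proj1 (Hf i)) mulr1.
rewrite /bary; under eq_bigr do rewrite (proj2 (Hf _)) /bary scaler_sumr.
rewrite exchange_big /=; apply: eq_bigr => l _.
by rewrite scaler_suml; apply: eq_bigr => i _; rewrite scalerA.
Qed.

Lemma conv_aff (S : set pt) : conv S `<=` aff S.
Proof. by move=> x [k [p [w [Sp [_ [w1 ->]]]]]]; exists k, p, w. Qed.

Lemma aff_sub (S : set pt) x : S x -> aff S x.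
Proof. by move=> Sx; apply: conv_aff; apply: conv_sub. Qed.

Lemma affc_bary k (U : 'I_k -> pt) b : \sum_i b i = 1 -> affc U (bary U b).
Proof. by move=> b1; exists b. Qed.

Lemma dotvD c (u v : pt) : dotv c (u + v) = dotv c u + dotv c v.
Proof. by rewrite /dotv -big_split; apply: eq_bigr => i _; rewrite mxE mulrDr. Qed.

Lemma dotvZ c a (u : pt) : dotv c (a *: u) = a * dotv c u.
Proof. by rewrite /dotv mulr_sumr; apply: eq_bigr => i _; rewrite mxE mulrCA. Qed.

Lemma dotv0 c : dotv c (0 : pt) = 0.
Proof. by rewrite /dotv big1 // => i _; rewrite mxE mulr0. Qed.

Lemma dotv_sum c k (F : 'I_k -> pt) : dotv c (\sum_i F i) = \sum_i dotv c (F i).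
Proof.
rewrite /dotv exchange_big /=; apply: eq_bigr => j _.
by rewrite summxE mulr_sumr.
Qed.

Lemma dotv_bary c k (U : 'I_k -> pt) b :
  dotv c (bary U b) = \sum_i b i * dotv c (U i).
Proof. by rewrite /bary dotv_sum; apply: eq_bigr => i _; rewrite dotvZ. Qed.

Lemma affine_bary c b0 k (U : 'I_k -> pt) b : \sum_i b i = 1 ->
  dotv c (bary U b) + b0 = \sum_i b i * (dotv c (U i) + b0).
Proof.
move=> b1; rewrite dotv_bary.
under [RHS]eq_bigr do rewrite mulrDr.
by rewrite big_split /= -mulr_suml b1 mul1r.
Qed.


Definition Mx k (U : 'I_k.+1 -> pt) : 'M[R]_(k, n) :=
  \matrix_(i < k, j < n) (U (lift ord0 i) - U ord0) ord0 j.

Lemma Mx_mul k (U : 'I_k.+1 -> pt) (g : 'rV[R]_k) :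
  g *m Mx U = \sum_(i < k) g 0 i *: (U (lift ord0 i) - U ord0).
Proof.
apply/rowP => j; rewrite !mxE summxE; apply: eq_bigr => i _.
by rewrite !mxE.
Qed.

Lemma bary_diff k (U : 'I_k.+1 -> pt) (a : 'I_k.+1 -> R) : \sum_i a i = 0 ->
  bary U a = \sum_(i < k) a (lift ord0 i) *: (U (lift ord0 i) - U ord0).
Proof.
rewrite big_ord_recl => /eqP; rewrite addr_eq0 => /eqP a0.
rewrite /bary big_ord_recl a0.
under [RHS]eq_bigr do rewrite scalerBr.
by rewrite sumrB scaleNr -scaler_suml addrC.
Qed.

Lemma ker_nz p q (A : 'M[R]_(p, q)) : (\rank A < p)%N ->
  exists g : 'rV[R]_p, g != 0 /\ g *m A = 0.
Proof.
move=> rA.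
have Knz : kermx A != 0.
  by rewrite -mxrank_eq0 mxrank_ker subn_eq0 -ltnNge.
have [i Hi] : exists i, row i (kermx A) != 0.
  apply/not_existsP => H; move/negP: Knz; apply.
  apply/eqP/row_matrixP => i; rewrite row0.
  by move: (H i); case: eqP.
exists (row i (kermx A)); split=> //.
by rewrite -row_mul mulmx_ker row0.
Qed.

Lemma dep k (U : 'I_k.+1 -> pt) : ~~ affindep U ->
  exists a : 'I_k.+1 -> R, (exists i, a i != 0) /\ \sum_i a i = 0 /\ bary U a = 0.
Proof.
move=> nU.
have rk : (\rank (Mx U) < k)%N.
  by rewrite ltn_neqAle rank_leq_row andbT.
have [g [gnz gM]] := ker_nz rk.
pose a := fun l : 'I_k.+1 => if unlift ord0 l is Some i then g 0 i
                             else - \sum_(i < k) g 0 i.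
have aS : forall i, a (lift ord0 i) = g 0 i by move=> i; rewrite /a liftK.
have a1 : \sum_i a i = 0.
  rewrite big_ord_recl; under eq_bigr do rewrite aS.
  by rewrite /a unlift_none addNr.
exists a; split; [|split=> //].
  have [i gi] : exists i, g 0 i != 0.
    apply/not_existsP => H; move/negP: gnz; apply; apply/eqP/rowP => i.
    by rewrite mxE; move: (H i); case: eqP.
  by exists (lift ord0 i); rewrite aS.
rewrite bary_diff //; under eq_bigr do rewrite aS.
by rewrite -Mx_mul.
Qed.

Lemma indep k (U : 'I_k.+1 -> pt) : affindep U ->
  forall a : 'I_k.+1 -> R, \sum_i a i = 0 -> bary U a = 0 -> forall i, a i = 0.
Proof.
move=> iU a a0 aU.
pose g : 'rV[R]_k := \row_i a (lift ord0 i).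
have gM : g *m Mx U = 0 *m Mx U.
  rewrite mul0mx Mx_mul -[X in _ = X]aU bary_diff //.
  by apply: eq_bigr => i _; rewrite mxE.
have g0 := row_free_inj iU gM.
have aS : forall i, a (lift ord0 i) = 0.
  by move=> i; move/rowP: g0 => /(_ i); rewrite !mxE.
move=> i; case: (unliftP ord0 i) => [j ->|->]; first exact: aS.
move: a0; rewrite big_ord_recl big1 ?addr0 //.
Qed.

Lemma bary_uniq k (U : 'I_k.+1 -> pt) : affindep U ->
  forall a b : 'I_k.+1 -> R, \sum_i a i = \sum_i b i -> bary U a = bary U b ->
  forall i, a i = b i.
Proof.
move=> iU a b ab Uab i; apply/eqP; rewrite -subr_eq0; apply/eqP.
apply: (indep iU (a := fun i => a i - b i)) => //.
  by rewrite sumrB ab subrr.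
rewrite /bary; under eq_bigr do rewrite scalerBl.
by rewrite sumrB -/(bary U a) -/(bary U b) Uab subrr.
Qed.


Lemma dotv_mx c (y : pt) : dotv c y = (y *m c^T) 0 0.
Proof. by rewrite mxE /dotv; apply: eq_bigr => j _; rewrite mxE mulrC. Qed.

Lemma solve_aff k (V : 'I_k.+1 -> pt) (h : 'I_k.+1 -> R) : affindep V ->
  exists (c : pt) (b : R), forall l, dotv c (V l) = b + h l.
Proof.
move=> iV; have /row_freeP [B MB] := iV.
pose t : 'cV[R]_k := \col_i (h (lift ord0 i) - h ord0).
pose X := B *m t.
exists X^T, (dotv X^T (V ord0) - h ord0) => l.
case: (unliftP ord0 l) => [i ->|->]; last by rewrite subrK.
have rowi : V (lift ord0 i) - V ord0 = row i (Mx V).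
  by apply/rowP => j; rewrite !mxE.
have : dotv X^T (V (lift ord0 i) - V ord0) = h (lift ord0 i) - h ord0.
  rewrite dotv_mx rowi trmxK /X mulmxA -row_mul MB -row_mul mul1mx.
  by rewrite !mxE.
rewrite dotvD -scaleN1r dotvZ mulN1r => /eqP; rewrite subr_eq => /eqP ->.
ring.
Qed.


Lemma sum_lift (M : nmodType) k (i : 'I_k.+1) (F : 'I_k.+1 -> M) :
  \sum_(l < k.+1) F l = F i + \sum_(j < k) F (lift i j).
Proof. by rewrite (bigD1_ord i). Qed.

Lemma dotv_bary_h c b k (V : 'I_k -> pt) (h : 'I_k -> R) (be : 'I_k -> R) :
  (forall l, dotv c (V l) = b + h l) -> \sum_l be l = 1 ->
  dotv c (bary V be) = b + \sum_l be l * h l.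
Proof.
move=> Hc b1; rewrite dotv_bary.
under eq_bigr do rewrite Hc mulrDr.
by rewrite big_split /= -mulr_suml b1 mul1r.
Qed.

Lemma psum0 k (F : 'I_k -> R) : (forall i, 0 <= F i) -> \sum_i F i = 0 ->
  forall i, F i = 0.
Proof.
move=> F0 /eqP; rewrite psumr_eq0 // => /allP H i.
by apply/eqP; apply: H; rewrite mem_index_enum.
Qed.

Lemma vertexV k (V : 'I_k.+1 -> pt) i : affindep V -> vertex (conv (range V)) (V i).
Proof.
move=> iV.
have [c [b Hc]] := solve_aff (fun l => - (l != i)%:R) iV.
have key : forall be : 'I_k.+1 -> R, (forall l, 0 <= be l) -> \sum_l be l = 1 ->
    dotv c (bary V be) = b - \sum_l be l * (l != i)%:R.
  move=> be be0 be1; rewrite (dotv_bary_h Hc be1).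
  by rewrite -sumrN; congr (_ + _); apply: eq_bigr => l _; rewrite mulrN.
have sge0 : forall be : 'I_k.+1 -> R, (forall l, 0 <= be l) ->
    0 <= \sum_l be l * (l != i)%:R.
  by move=> be be0; apply: sumr_ge0 => l _; apply: mulr_ge0.
exists c, b; split.
  move=> y /conv_range [be [be0 [be1 ->]]].
  by rewrite key // lerBlDr lerDl sge0.
apply/seteqP; split.
  move=> y -> /=; split; first by apply: conv_sub; exists i.
  by rewrite Hc eqxx oppr0 addr0.
move=> y [/conv_range [be [be0 [be1 ->]]]] /=.
rewrite key // => /eqP; rewrite subr_eq addrC -subr_eq subrr eq_sym => /eqP H.
have z := psum0 (fun l => mulr_ge0 (be0 l) (ler0n _ (l != i))) H.
have bel : forall l, l != i -> be l = 0.
  by move=> l li; move: (z l); rewrite li mulr1.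
have bei : be i = 1.
  by rewrite -be1 (bigD1 i) //= big1 ?addr0 // => l /bel.
rewrite /bary (bigD1 i) //= bei scale1r big1 ?addr0 //.
by move=> l /bel ->; rewrite scale0r.
Qed.

Lemma vertex_in k (V : 'I_k -> pt) v : vertex (conv (range V)) v -> exists i, v = V i.
Proof.
move=> [c [b [Hle Heq]]].
have : ([set v] : set pt) v by [].
rewrite Heq => -[/conv_range [be [be0 [be1 vE]]]] /= dv.
have [i Hi] : exists i, dotv c (V i) = b.
  apply/not_existsP => H.
  have lt : forall l, dotv c (V l) < b.
    move=> l; rewrite lt_def; apply/andP; split; first by apply/eqP => E; apply: (H l); rewrite E.
    by apply: Hle; apply: conv_sub; exists l.
  move: dv; rewrite vE dotv_bary => /eqP; apply/negP.
  rewrite lt_eqF // -[b]mul1r -be1 mulr_suml.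
  have [l bl] : exists l, be l != 0.
    apply/not_existsP => H'; move: be1; rewrite big1 => [/eqP|l _].
      by rewrite eq_sym oner_eq0.
    by move: (H' l); case: eqP.
  rewrite [X in X < _](bigD1 l) // [X in _ < X](bigD1 l) //=.
  apply: ltr_leD; first by rewrite ltr_pM2l ?lt // lt_def bl be0.
  by apply: ler_sum => m _; apply: ler_wpM2l => //; apply: ltW; apply: lt.
exists i.
have : ([set v] : set pt) (V i) by rewrite Heq; split => //; apply: conv_sub; exists i.
by move=> ->.
Qed.


Lemma rank_bound m (U : 'I_m.+1 -> pt) : ~ affdim_ge (conv (range U)) m.+1.
Proof.
move=> [p [Cp ip]].
have /choice [f Hf] : forall i : 'I_m.+2, exists be : 'I_m.+1 -> R,
   (forall l, 0 <= be l) /\ \sum_l be l = 1 /\ p i = bary U be.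
  by move=> i; apply/conv_range.
pose Wm : 'M[R]_(m.+2, m.+1) := \matrix_(i, l) f i l.
have [g [gnz gW]] := @ker_nz _ _ Wm (rank_leq_col Wm).
have gl : forall l, \sum_i g 0 i * f i l = 0.
  move=> l; move/rowP: gW => /(_ l); rewrite !mxE => H; rewrite -[X in _ = X]H.
  by apply: eq_bigr => i _; rewrite mxE.
have a0 : \sum_i g 0 i = 0.
  transitivity (\sum_(l < m.+1) \sum_i g 0 i * f i l); last first.
    by rewrite big1 // => l _; apply: gl.
  rewrite exchange_big /=.
  by apply: eq_bigr => i _; rewrite -mulr_sumr (proj1 (proj2 (Hf i))) mulr1.
have ab : bary p (fun i => g 0 i) = 0.
  rewrite /bary; under eq_bigr do rewrite (proj2 (proj2 (Hf _))) /bary scaler_sumr.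
  rewrite exchange_big /= big1 // => l _.
  under eq_bigr do rewrite scalerA.
  by rewrite -scaler_suml gl scale0r.
have := indep ip a0 ab => H0.
move/negP: gnz; apply; apply/eqP/rowP => i; rewrite mxE; exact: H0.
Qed.

Lemma sub_indep k (V : 'I_k.+2 -> pt) (i : 'I_k.+2) : affindep V ->
  affindep (fun j => V (lift i j)).
Proof.
move=> iV; apply/negPn/negP => /dep [a [[j aj] [a0 ab]]].
pose a' := fun l => if unlift i l is Some j then a j else 0.
have a'S : forall j, a' (lift i j) = a j by move=> j'; rewrite /a' liftK.
have a'i : a' i = 0 by rewrite /a' unlift_none.
have := indep iV (a := a').
rewrite (sum_lift i) a'i add0r; under eq_bigr do rewrite a'S.
move=> /(_ a0); rewrite /bary (sum_lift i) a'i scale0r add0r.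
under eq_bigr do rewrite a'S.
move=> /(_ ab) /(_ (lift i j)); rewrite a'S => /eqP; by rewrite (negbTE aj).
Qed.


Lemma affdim_ge_mono (S T : set pt) k : S `<=` T -> affdim_ge S k -> affdim_ge T k.
Proof. by move=> ST [p [Sp ip]]; exists p; split=> // i; apply: ST. Qed.

Lemma affdim_simplex k (V : 'I_k.+1 -> pt) : affindep V -> affdim (conv (range V)) k.
Proof.
move=> iV; split; last exact: rank_bound.
by exists V; split=> // i; apply: conv_sub; exists i.
Qed.

Lemma facet_simplex k (V : 'I_k.+2 -> pt) (i : 'I_k.+2) : affindep V ->
  facet (conv (range V)) (conv (range (fun j => V (lift i j)))).
Proof.
move=> iV; split; last first.
  exists k; split; first exact: affdim_simplex.
  by apply: affdim_simplex; apply: sub_indep.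
have [c [b Hc]] := solve_aff (fun l => - (l == i)%:R) iV.
have key : forall be : 'I_k.+2 -> R, \sum_l be l = 1 ->
    dotv c (bary V be) = b - be i.
  move=> be be1; rewrite (dotv_bary_h Hc be1); congr (_ + _).
  rewrite (bigD1 i) //= eqxx mulrN1 big1 ?addr0 //.
  by move=> l /negbTE ->; rewrite mulrN mulr0 oppr0.
exists c, b; split.
  move=> y /conv_range [be [be0 [be1 ->]]].
  by rewrite key // lerBlDr lerDl.
apply/seteqP; split.
  move=> y /conv_range [be [be0 [be1 ->]]]; split.
    apply: (@conv_mono (range (fun j => V (lift i j)))).
      by move=> _ [j _ <-]; exists (lift i j).
    by apply/conv_range; exists be.
  rewrite /= (dotv_bary_h (h := fun j => 0) (b := b)) ?be1 //.
    by rewrite big1 ?addr0 // => j _; rewrite mulr0.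
  by move=> j; rewrite Hc /= eq_sym (negbTE (neq_lift i j)) oppr0 addr0.
move=> y [/conv_range [be [be0 [be1 ->]]]] /=.
rewrite key // => /eqP; rewrite subr_eq addrC -subr_eq subrr eq_sym => /eqP bi.
apply/conv_range; exists (fun j => be (lift i j)); split=> //; split.
  by rewrite -be1 (sum_lift i) bi add0r.
by rewrite /bary (sum_lift i) bi scale0r add0r.
Qed.


Lemma face_support k (V : 'I_k -> pt) c b y :
  (forall y, conv (range V) y -> dotv c y <= b) ->
  conv (range V) y -> dotv c y = b ->
  exists mu : 'I_k -> R, (forall l, 0 <= mu l) /\ \sum_l mu l = 1 /\
     y = bary V mu /\ forall l, dotv c (V l) != b -> mu l = 0.
Proof.
move=> Hle /conv_range [mu [mu0 [mu1 ->]]] Hb; exists mu; do 3!split=> //.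
have Vle : forall l, dotv c (V l) <= b by move=> l; apply: Hle; apply: conv_sub; exists l.
have H : \sum_l mu l * (b - dotv c (V l)) = 0.
  under eq_bigr do rewrite mulrBr.
  by rewrite sumrB -mulr_suml mu1 mul1r -dotv_bary Hb subrr.
have z : forall l, mu l * (b - dotv c (V l)) = 0.
  by apply: psum0 H => l; apply: mulr_ge0 => //; rewrite subr_ge0.
move=> l nb; move/eqP: (z l); rewrite mulf_eq0 subr_eq0 [b == _]eq_sym (negbTE nb) orbF.
by move/eqP.
Qed.


Lemma g_conv c b0 (S : set pt) y : conv S y ->
  exists k (p : 'I_k -> pt) (w : 'I_k -> R), (forall i, S (p i)) /\ (forall i, 0 <= w i) /\
   \sum_i w i = 1 /\ y = bary p w /\
   dotv c y + b0 = \sum_i w i * (dotv c (p i) + b0).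
Proof.
move=> [k [p [w [Sp [w0 [w1 ->]]]]]]; exists k, p, w; do 4!split=> //.
exact: affine_bary.
Qed.

Lemma relint_zero (D : set pt) c b0 x0 :
  (forall y, D y -> 0 <= dotv c y + b0) -> relint D x0 -> dotv c x0 + b0 = 0 ->
  forall q, D q -> dotv c q + b0 = 0.
Proof.
move=> Dge [Dx0 [e [e0 He]]] gx0 q Dq.
pose M := \sum_i `|x0 0 i - q 0 i|.
have M0 : 0 <= M by apply: sumr_ge0.
pose t := e / (M + 1).
have t0 : 0 < t by apply: divr_gt0 => //; apply: ltr_wpDl.
pose y := (1 + t) *: x0 + (- t) *: q.
have Dy : D y.
  apply: He.
    exists 2%N, (fun i : 'I_2 => if i == ord0 then x0 else q),
                (fun i : 'I_2 => if i == ord0 then 1 + t else - t).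
    split; first by move=> i; case: ifP.
    split; first by rewrite !big_ord_recl big_ord0 /= addr0 addrK.
    by rewrite !big_ord_recl big_ord0 /= addr0.
  move=> i; rewrite !mxE.
  have -> : (1 + t) * x0 0 i + - t * q 0 i - x0 0 i = t * (x0 0 i - q 0 i) by ring.
  rewrite normrM (gtr0_norm t0).
  have di : `|x0 0 i - q 0 i| <= M.
    by rewrite /M (bigD1 i) //= lerDl sumr_ge0.
  have : t * `|x0 0 i - q 0 i| <= t * M by rewrite ler_pM2l.
  move/le_lt_trans; apply.
  rewrite /t mulrAC ltr_pdivrMr ?ltr_wpDl // ltr_pM2l //.
  by rewrite ltrDl.
have := Dge _ Dy; rewrite dotvD !dotvZ.
have := Dge _ Dq => gq.
move=> H.
have : t * (dotv c q + b0) <= 0.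
  have -> : t * (dotv c q + b0) = (1 + t) * (dotv c x0 + b0) - ((1 + t) * dotv c x0 + - t * dotv c q + b0).
    by ring.
  by rewrite gx0 mulr0 sub0r oppr_le0.
rewrite pmulr_rle0 // => gq'.
by apply/eqP; rewrite eq_le gq' gq.
Qed.


Lemma wall (Ap : seq pt) D m (U : 'I_m.+1 -> pt) x0 x s :
  refinement_cell Ap D -> (forall i, U i \in Ap) -> relint D x0 -> D x ->
  0 <= s -> s < 1 ->
  conv (range U) ((1 - s) *: x0 + s *: x) -> D `<=` conv (range U).
Proof.
move=> [_ [sigma [Hs HD]]] UA rx0 Dx s0 s1 Cz.
pose w := fun y : pt => if [exists i, y == U i] then (0 : R) else 1.
have w0 : forall y, 0 <= w y by move=> y; rewrite /w; case: ifP.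
have [c [b0 [Hle [_ Hsig]]]] := Hs w.
have DK : D `<=` sigma w by move=> y; rewrite HD => /(_ w).
have gK : forall y, D y -> 0 <= dotv c y + b0.
  move=> y /DK; rewrite Hsig => /(g_conv c b0) [k [p [a [Sp [a0 [a1 [_ ->]]]]]]].
  apply: sumr_ge0 => i _; apply: mulr_ge0 => //.
  by case: (Sp i) => _ ->.
have gU : forall y, conv (range U) y -> dotv c y + b0 <= 0.
  move=> y /conv_range [be [be0 [be1 ->]]]; rewrite affine_bary //.
  apply: sumr_le0 => i _; apply: mulr_ge0_le0 => //.
  have := Hle _ (UA i); rewrite /w.
  by have -> : [exists j, U i == U j] by apply/existsP; exists i.
have gx0 : dotv c x0 + b0 = 0.
  have := gU _ Cz; rewrite dotvD !dotvZ.
  have := gK _ (proj1 rx0); have := gK _ Dx.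
  move: (dotv c x0) (dotv c x) => u v gv gu H.
  have : (1 - s) * (u + b0) <= 0.
    have -> : (1 - s) * (u + b0) = (1 - s) * u + s * v + b0 - s * (v + b0) by ring.
    by rewrite subr_le0; apply: le_trans H _; apply: mulr_ge0.
  rewrite pmulr_rle0 ?subr_gt0 // => H'.
  by apply/eqP; rewrite eq_le H' gu.
have g0 := relint_zero gK rx0 gx0.
move=> q Dq; have gq := g0 q Dq.
move: (DK q Dq); rewrite Hsig => /(g_conv c b0) [k [p [a [Sp [a0 [a1 [qE gE]]]]]]].
have z : forall i, a i * (dotv c (p i) + b0) = 0.
  apply: psum0; last by rewrite -gE.
  by move=> i; apply: mulr_ge0 => //; case: (Sp i) => _ ->.
exists k, (fun i => if a i == 0 then U ord0 else p i), a; split; last first.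
  split=> //; split=> //; rewrite qE /bary; apply: eq_bigr => i _.
  by case: eqP => // ->; rewrite !scale0r.
move=> i; case: eqP => ai; first by exists ord0.
move/eqP: (z i); rewrite mulf_eq0 => /orP [/eqP //|].
case: (Sp i) => _ ->; rewrite /w; case: ifP => [/existsP [j /eqP ->] _|]; last first.
  by rewrite oner_eq0.
by exists j.
Qed.


Lemma in_affc k (V : 'I_k.+1 -> pt) (S : set pt) y : affindep V ->
  (forall i, S (V i)) -> ~ affdim_ge S k.+1 -> S y -> affc V y.
Proof.
move=> iV SV nS Sy; apply: contrapT => ny; apply: nS.
pose P := fun l : 'I_k.+2 => if unlift ord_max l is Some i then V i else y.
have PS : forall i, P (lift ord_max i) = V i by move=> i; rewrite /P liftK.
have Pm : P ord_max = y by rewrite /P unlift_none.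
exists P; split.
  by move=> l; rewrite /P; case: unlift.
apply/negPn/negP => /dep [al [[i ai] [a0 ab]]].
have [am|am] := eqVneq (al ord_max) 0.
  have a0' : \sum_(i < k.+1) al (lift ord_max i) = 0.
    by move: a0; rewrite (sum_lift (@ord_max k.+1)) am add0r.
  have ab' : bary V (fun i => al (lift ord_max i)) = 0.
    move: ab; rewrite /bary (sum_lift (@ord_max k.+1)) am scale0r add0r.
    by under eq_bigr do rewrite PS.
  have H := indep iV a0' ab'.
  move: ai; case: (unliftP ord_max i) => [j ->|->]; by rewrite ?H ?am eqxx.
apply: ny; exists (fun i => - al (lift ord_max i) / al ord_max); split.
  rewrite -mulr_suml sumrN.
  move: a0; rewrite (sum_lift (@ord_max k.+1)) addrC => /eqP; rewrite addr_eq0 => /eqP ->.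
  by rewrite opprK divff.
move: ab; rewrite /bary (sum_lift (@ord_max k.+1)) Pm; under eq_bigr do rewrite PS.
move=> /eqP; rewrite addr_eq0 => /eqP H.
have -> : y = (al ord_max)^-1 *: (al ord_max *: y) by rewrite scalerA mulVf // scale1r.
rewrite H scalerN scaler_sumr -sumrN; apply: eq_bigr => l _.
by rewrite scalerA -scaleNr mulrC mulNr.
Qed.


Lemma relint_ex k (p : 'I_k.+1 -> pt) (D : set pt) : convexS D ->
  (forall i, D (p i)) -> affindep p -> aff D `<=` affc p -> exists x0, relint D x0.
Proof.
move=> cD Dp ip affD.
have hD : conv (range p) `<=` D by apply: hull => // _ [i _ <-].
have /row_freeP [B MB] := ip.
pose c0 : R := (k.+1%:R)^-1.
have c00 : 0 < c0 by rewrite invr_gt0 ltr0n.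
have c0s : \sum_(i < k.+1) c0 = 1 by rewrite sumr_const card_ord -mulr_natr /c0 mulVf // pnatr_eq0.
pose S := \sum_(i < k) \sum_(j < n) `|B j i|.
have S0 : 0 <= S by apply: sumr_ge0 => i _; apply: sumr_ge0.
pose e := c0 / (S + 1).
have e0 : 0 < e by apply: divr_gt0 => //; apply: ltr_wpDl.
pose x0 := bary p (fun _ => c0).
exists x0; split.
  by apply: hD; apply/conv_range; exists (fun _ => c0); split=> //; move=> i; apply: ltW.
exists e; split=> // y /affD [be [be1 ->]] near.
pose al := fun l => be l - c0.
have al0 : \sum_l al l = 0 by rewrite sumrB be1 c0s subrr.
have alb : bary p al = bary p be - x0.
  by rewrite /bary -sumrB; apply: eq_bigr => l _; rewrite scalerBl.
pose dl : 'rV[R]_k := \row_i al (lift ord0 i).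
have dM : dl *m Mx p = bary p be - x0.
  rewrite -alb Mx_mul bary_diff //; apply: eq_bigr => i _; by rewrite mxE.
have dE : dl = (bary p be - x0) *m B by rewrite -dM -mulmxA MB mulmx1.
have dle : forall i, `|dl 0 i| <= e * \sum_(j < n) `|B j i|.
  move=> i; rewrite dE mxE mulr_sumr.
  apply: le_trans (ler_norm_sum _ _ _) _; apply: ler_sum => j _.
  rewrite normrM ler_wpM2r //; apply: ltW.
  by have := near j; rewrite !mxE.
have sdl : \sum_i `|dl 0 i| < c0.
  apply: le_lt_trans (ler_sum _ (fun i _ => dle i)) _.
  rewrite -mulr_sumr -/S /e mulrAC ltr_pdivrMr ?ltr_wpDl // ltr_pM2l //.
  by rewrite ltrDl.
have dli : forall i, `|dl 0 i| <= \sum_i `|dl 0 i|.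
  by move=> i; rewrite (bigD1 i) //= lerDl sumr_ge0.
apply: hD; apply/conv_range; exists be; split=> //.
move=> l; case: (unliftP ord0 l) => [i ->|->].
  have : be (lift ord0 i) = c0 + dl 0 i by rewrite mxE /al addrC subrK.
  move=> ->; apply: ltW; rewrite -(opprK (dl 0 i)) subr_gt0.
  apply: le_lt_trans (ler_norm (- dl 0 i)) _; rewrite normrN; apply: le_lt_trans (dli i) sdl.
have -> : be ord0 = 1 - \sum_(i < k) be (lift ord0 i) by rewrite -be1 big_ord_recl addrK.
have -> : \sum_(i < k) be (lift ord0 i) = \sum_(i < k) (c0 + dl 0 i).
  by apply: eq_bigr => i _; rewrite mxE /al addrC subrK.
rewrite big_split /= -c0s big_ord_recl opprD addrA addrK.
apply: ltW; rewrite subr_gt0; apply: le_lt_trans sdl.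
apply: le_trans (ler_norm _) _; exact: ler_norm_sum.
Qed.


Lemma drop k (W : 'I_k.+1 -> pt) be l : (forall i, 0 <= be i) -> \sum_i be i = 1 ->
  be l = 0 -> conv (range (fun j => W (lift l j))) (bary W be).
Proof.
move=> be0 be1 bl; apply/conv_range; exists (fun j => be (lift l j)); split=> //; split.
  by rewrite -be1 (sum_lift l) bl add0r.
by rewrite /bary (sum_lift l) bl scale0r add0r.
Qed.

Lemma bary_comb k (U : 'I_k -> pt) a b s :
  bary U (fun l => (1 - s) * a l + s * b l) = (1 - s) *: bary U a + s *: bary U b.
Proof.
rewrite /bary !scaler_sumr -big_split; apply: eq_bigr => i _ /=.
by rewrite scalerA scalerA -scalerDl.
Qed.

Lemma conv_rel (S : set pt) x : relint S x -> S x.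
Proof. by case. Qed.

End Aux.

Section Core.
Variables (R : realType) (n : nat).
Notation pt := ('rV[R]_n).
Variables (Ap : seq pt) (D : set pt) (d : nat) (V : 'I_d.+2 -> pt) (x0 : pt)
  (mu : 'I_d.+2 -> R) (pD : 'I_d.+2 -> pt).
Hypotheses (RC : refinement_cell Ap D) (pDin : forall i, D (pD i))
  (pDind : affindep pD) (HAff : forall y, y \in Ap -> affc pD y)
  (HAffV : forall y, D y -> affc V y)
  (VA : forall l, V l \in Ap) (Vind : affindep V) (rx0 : relint D x0)
  (mu0 : forall l, 0 <= mu l) (mu1 : \sum_l mu l = 1) (x0E : x0 = bary V mu).

Lemma bad (U : 'I_d.+1 -> pt) : (forall i, U i \in Ap) -> forall x s, D x ->
  0 <= s -> s < 1 -> ~ conv (range U) ((1 - s) *: x0 + s *: x).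
Proof.
move=> UA x s Dx s0 s1 C; have DU := wall RC UA rx0 Dx s0 s1 C.
by apply: (@rank_bound _ _ _ U); apply: affdim_ge_mono DU _; exists pD.
Qed.

Lemma bad0 (U : 'I_d.+1 -> pt) : (forall i, U i \in Ap) -> ~ conv (range U) x0.
Proof.
move=> UA C; apply: (bad UA (conv_rel rx0) (lexx 0) ltr01).
by rewrite subr0 scale1r scale0r addr0.
Qed.

Lemma mu_pos l : 0 < mu l.
Proof.
rewrite lt_def mu0 andbT; apply/eqP => ml.
apply: (@bad0 (fun j => V (lift l j))) => [j|]; first exact: VA.
by rewrite x0E; apply: drop.
Qed.


Section WithA.
Variables (a : pt) (lam : 'I_d.+2 -> R).
Hypotheses (aA : a \in Ap) (lam1 : \sum_l lam l = 1) (aE : a = bary V lam).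

Definition Wk k := fun l => if l == k then a else V l.
Definition Tc k (g : 'I_d.+2 -> R) := fun l => (if l == k then 0 else g l) + g k * lam l.

Lemma bary_W k g : bary (Wk k) g = bary V (Tc k g).
Proof.
rewrite /bary /Tc; under [RHS]eq_bigr do rewrite scalerDl.
rewrite big_split /=.
have -> : \sum_i (g k * lam i) *: V i = g k *: a.
  by rewrite aE /bary scaler_sumr; apply: eq_bigr => i _; rewrite scalerA.
rewrite (bigD1 k) //= [in RHS](bigD1 k) //= /Wk eqxx scale0r add0r addrC.
congr (_ + _); apply: eq_bigr => i /negbTE ->; by [].
Qed.

Lemma sum_Tc k g : \sum_l Tc k g l = \sum_l g l.
Proof.
rewrite /Tc big_split /= -mulr_sumr lam1 mulr1.
by rewrite (bigD1 k) //= eqxx add0r [in RHS](bigD1 k) //= addrC;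
   congr (_ + _); apply: eq_bigr => i /negbTE ->.
Qed.

Lemma WA k l : Wk k l \in Ap.
Proof. by rewrite /Wk; case: eqP. Qed.

Lemma W_indep k : 0 < lam k -> affindep (Wk k).
Proof.
move=> lk; apply/negPn/negP => /dep [al [[i ai] [a0 ab]]].
have H := indep Vind (a := Tc k al); rewrite sum_Tc -bary_W in H.
have H' := H a0 ab.
have ak : al k = 0.
  by move: (H' k); rewrite /Tc eqxx add0r => /eqP; rewrite mulf_eq0 [lam k == 0]gt_eqF // orbF => /eqP.
move: ai; have [->|ik] := eqVneq i k; first by rewrite ak eqxx.
by move: (H' i); rewrite /Tc (negbTE ik) ak mul0r addr0 => ->; rewrite eqxx.
Qed.

Lemma W_conv k : conv (conv (range (fun j => V (lift k j))) `|` [set a]) =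
  conv (range (Wk k)).
Proof.
apply/seteqP; split.
  apply: hull; first exact: conv_convex.
  move=> y [|->]; last by apply: conv_sub; exists k => //; rewrite /Wk eqxx.
  apply: conv_mono => _ [j _ <-]; exists (lift k j) => //.
  by rewrite /Wk eq_sym (negbTE (neq_lift k j)).
apply: conv_mono => _ [l _ <-]; rewrite /Wk; case: eqP => [_|/eqP lk]; first by right.
left; apply: conv_sub; case: (unliftP k l) lk => [j ->|->] //; by rewrite eqxx.
Qed.


Definition Wc k (g : 'I_d.+2 -> R) :=
  fun l => if l == k then g k / lam k else g l - g k * lam l / lam k.

Lemma Tc_Wc k g : lam k != 0 -> Tc k (Wc k g) = g.
Proof.
move=> lk; apply/funext => l; rewrite /Tc /Wc eqxx.
case: eqP => [->|_]; first by rewrite add0r divfK.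
by rewrite mulrAC subrK.
Qed.

Lemma W_coords k y g : lam k != 0 -> \sum_l g l = 1 -> y = bary V g ->
  \sum_l Wc k g l = 1 /\ y = bary (Wk k) (Wc k g).
Proof.
move=> lk g1 ->; split; first by rewrite -(sum_Tc k) Tc_Wc.
by rewrite bary_W Tc_Wc.
Qed.

Lemma exist_part : exists k, 0 < lam k /\
  (forall l, 0 < lam l -> mu k * lam l <= mu l * lam k).
Proof.
have [l0 l00] : exists l, 0 < lam l.
  apply: contrapT => H.
  have : \sum_l lam l <= 0.
    apply: sumr_le0 => l _; rewrite leNgt; apply/negP => Hl; apply: H; by exists l.
  by rewrite lam1 ler10.
have [k Pk Hmin] := arg_minP (P := fun l => 0 < lam l) (fun l => mu l / lam l) l00.
exists k; split=> // l Pl; have := Hmin l Pl.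
by rewrite ler_pdivlMr // mulrAC ler_pdivrMr.
Qed.

Lemma D_sub_W k : 0 < lam k ->
  (forall l, 0 < lam l -> mu k * lam l <= mu l * lam k) -> D `<=` conv (range (Wk k)).
Proof.
move=> lk amin q Dq.
have lk0 : lam k != 0 by rewrite gt_eqF.
have [be [be1 qE]] := HAffV Dq.
have [g1 qW] := W_coords lk0 be1 qE.
have [g01 x0W] := W_coords lk0 mu1 x0E.
set g := Wc k be in g1 qW; set g0 := Wc k mu in g01 x0W.
have g0ge : forall l, 0 <= g0 l.
  move=> l; rewrite /g0 /Wc; case: eqP => [_|_].
    by apply: divr_ge0 => //; apply: ltW.
  rewrite subr_ge0; have [ll|ll] := ltP 0 (lam l).
    by rewrite ler_pdivrMr //; apply: amin.
  apply: le_trans (mu0 l); apply: mulr_le0_ge0; last by rewrite invr_ge0 ltW.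
  exact: mulr_ge0_le0.
have g0pos : forall l, 0 < g0 l.
  move=> l; rewrite lt_def g0ge andbT; apply/eqP => gl.
  apply: (@bad0 (fun j => Wk k (lift l j))) => [j|]; first exact: WA.
  by rewrite x0W; apply: drop.
have [Hall|Hex] := pselect (forall l, 0 <= g l).
  by apply/conv_range; exists g.
have [l0 gl0] : exists l, g l < 0.
  apply: contrapT => H; apply: Hex => l; rewrite leNgt; apply/negP => Hl.
  by apply: H; exists l.
have [ls Pls Hmin] := arg_minP (P := fun l => g l < 0)
  (fun l => g0 l / (g0 l - g l)) gl0.
have dpos : forall l, g l < 0 -> 0 < g0 l - g l.
  by move=> l gl; rewrite subr_gt0; apply: lt_trans gl (g0pos l).
set s := g0 ls / (g0 ls - g ls) in Hmin.
have s0 : 0 <= s by apply: divr_ge0; [apply: ltW | apply: ltW; apply: dpos].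
have s1 : s < 1.
  by rewrite /s ltr_pdivrMr ?dpos // mul1r; move: Pls; rewrite /=; lra.
pose z := fun l => (1 - s) * g0 l + s * g l.
have zge : forall l, 0 <= z l.
  move=> l; rewrite /z; have [gl|gl] := leP 0 (g l).
    by apply: addr_ge0; apply: mulr_ge0 => //; rewrite subr_ge0 ltW.
  have := Hmin l gl; rewrite ler_pdivlMr ?dpos // => H.
  have -> : (1 - s) * g0 l + s * g l = g0 l - s * (g0 l - g l) by ring.
  by rewrite subr_ge0.
have zls : z ls = 0.
  rewrite /z; have -> : (1 - s) * g0 ls + s * g ls = g0 ls - s * (g0 ls - g ls) by ring.
  by rewrite /s divfK ?subrr // gt_eqF // dpos.
have z1 : \sum_l z l = 1.
  by rewrite /z big_split /= -!mulr_sumr g01 g1 !mulr1 subrK.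
apply: False_ind; apply: (@bad (fun j => Wk k (lift ls j)) _ q s Dq s0 s1) => [j|].
  exact: WA.
by rewrite x0W qW -bary_comb; apply: drop.
Qed.


Lemma aff_W k : aff (conv (range (Wk k))) `<=` aff D.
Proof.
have h1 : range (Wk k) `<=` affc pD by move=> _ [l _ <-]; apply: HAff; apply: WA.
have h2 : conv (range (Wk k)) `<=` affc pD.
  by move=> y /conv_aff; apply: aff_affc.
move=> y /(aff_affc h2) [be [be1 ->]].
by exists d.+2, pD, be.
Qed.

Lemma Lambda_part k : 0 < lam k ->
  (forall l, 0 < lam l -> mu k * lam l <= mu l * lam k) ->
  Lambda Ap d.+1 D (conv (conv (range (fun j => V (lift k j))) `|` [set a])).
Proof.
move=> lk amin; exists (Wk k); split; first exact: WA.
split; first exact: W_indep.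
split; first exact: W_conv.
rewrite W_conv => x [Dx [e [e0 He]]]; split; first exact: D_sub_W.
exists e; split=> // y /aff_W Ay near; apply: D_sub_W => //; exact: He.
Qed.

Lemma bary0 k (U : 'I_k -> pt) : bary U (fun _ => 0) = 0.
Proof. by rewrite /bary big1 // => i _; rewrite scale0r. Qed.

Lemma unq_part G : facet (conv (range V)) G -> conv (G `|` [set a]) x0 ->
  exists i, G = conv (range (fun j => V (lift i j))) /\ 0 < lam i /\
   forall l, l != i -> 0 < lam l -> mu i * lam l < mu l * lam i.
Proof.
move=> [[c [b [Hle HG]]] [k' [dP dG]]] Cx0.
pose T l := dotv c (V l) == b.
pose C := fun x => exists t (nu : 'I_d.+2 -> R), 0 <= t /\ (forall l, 0 <= nu l) /\
   t + \sum_l nu l = 1 /\ (forall l, ~~ T l -> nu l = 0) /\ x = t *: a + bary V nu.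
have Cconv : convexS C.
  move=> u v s [t [nu [t0 [nu0 [tn1 [nuT ->]]]]]] [t' [nu' [t0' [nu0' [tn1' [nuT' ->]]]]]] s0 s1.
  exists ((1 - s) * t + s * t'), (fun l => (1 - s) * nu l + s * nu' l).
  have s1' : 0 <= 1 - s by rewrite subr_ge0.
  split; first by apply: addr_ge0; apply: mulr_ge0.
  split; first by move=> l; apply: addr_ge0; apply: mulr_ge0.
  split.
    rewrite big_split /= -!mulr_sumr.
    have -> : (1 - s) * t + s * t' + ((1 - s) * \sum_i nu i + s * \sum_i nu' i) =
      (1 - s) * (t + \sum_i nu i) + s * (t' + \sum_i nu' i) by ring.
    by rewrite tn1 tn1' !mulr1 subrK.
  split; first by move=> l Tl; rewrite nuT // nuT' // !mulr0 addr0.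
  rewrite bary_comb !scalerDr !scalerA [(_ + _) *: a]scalerDl.
  by rewrite addrACA.
have GC : G `<=` C.
  move=> y; rewrite HG => -[Cy dy].
  have [mu' [mu0' [mu1' [yE Hm]]]] := face_support Hle Cy dy.
  exists 0, mu'; split=> //; split=> //; split; first by rewrite add0r.
  by split; [move=> l /Hm | rewrite scale0r add0r].
have aC : C a.
  exists 1, (fun _ => 0); split=> //; split=> //; split.
    by rewrite big1 ?addr0.
  by rewrite bary0 scale1r addr0.
have GaC : G `|` [set a] `<=` C by move=> y [/GC // | ->].
have [t [nu [t0 [nu0 [tn1 [nuT x0C]]]]]] := hull Cconv GaC Cx0.
have muE : forall l, mu l = t * lam l + nu l.
  move=> l; apply/esym; move: l.
  apply: (bary_uniq Vind (a := fun l => t * lam l + nu l) (b := mu)).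
    by rewrite big_split /= -mulr_sumr lam1 mulr1 tn1 mu1.
  rewrite -x0E x0C /bary; under eq_bigr do rewrite scalerDl.
  rewrite big_split /= aE /bary scaler_sumr; congr (_ + _).
  by apply: eq_bigr => l _; rewrite scalerA.
have [i Ti] : exists i, ~~ T i.
  apply: contrapT => H.
  have allT : forall l, dotv c (V l) = b.
    move=> l; apply/eqP; apply: contrapT => /negP Hl; apply: H; by exists l.
  have PG : conv (range V) `<=` G.
    move=> y Cy; rewrite HG; split=> //=.
    move: Cy => /conv_range [be [be0 [be1 ->]]].
    rewrite (dotv_bary_h (h := fun _ => 0) (b := b)) //.
      by rewrite big1 ?addr0 // => l _; rewrite mulr0.
    by move=> l; rewrite allT addr0.
  by apply: (proj2 dG); apply: affdim_ge_mono PG (proj1 dP).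
have nui := nuT i Ti.
have mui : mu i = t * lam i by rewrite muE nui addr0.
have tpos : 0 < t.
  rewrite lt_def t0 andbT; apply/eqP => t00; have := mu_pos i.
  by rewrite mui t00 mul0r ltxx.
have lip : 0 < lam i by rewrite -(pmulr_rgt0 _ tpos) -mui mu_pos.
have nupos : forall l, l != i -> 0 < nu l.
  move=> l li; rewrite lt_def nu0 andbT; apply/eqP => nul.
  pose z := fun m => if m == i then t else nu m.
  have Tz : Tc i z = mu.
    apply/funext => m; rewrite /Tc /z eqxx muE.
    by case: eqP => [->|_]; rewrite ?nui ?add0r ?addr0 // addrC.
  apply: (@bad0 (fun j => Wk i (lift l j))) => [j|]; first exact: WA.
  have -> : x0 = bary (Wk i) z by rewrite bary_W Tz.
  apply: drop.
  - by move=> m; rewrite /z; case: eqP.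
  - by rewrite -(sum_Tc i) Tz.
  - by rewrite /z (negbTE li).
have Tl : forall l, l != i -> T l.
  move=> l li; apply: contrapT => /negP /nuT nl.
  by have := nupos l li; rewrite nl ltxx.
exists i; split; last split=> //.
  apply/seteqP; split.
    move=> y; rewrite HG => -[Cy dy].
    have [mu' [mu0' [mu1' [yE Hm]]]] := face_support Hle Cy dy.
    by rewrite yE; apply: drop => //; apply: Hm.
  move=> y /conv_range [be [be0 [be1 yE]]]; rewrite HG; split.
    apply: (conv_mono (S := range (fun j => V (lift i j)))).
      by move=> _ [j _ <-]; exists (lift i j).
    by apply/conv_range; exists be.
  rewrite /= yE (dotv_bary_h (h := fun _ => 0) (b := b)) //.
    by rewrite big1 ?addr0 // => l _; rewrite mulr0.
  move=> j; rewrite addr0; apply/eqP; apply: Tl.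
  by rewrite eq_sym neq_lift.
move=> l li ll; rewrite mui muE -subr_gt0.
have -> : (t * lam l + nu l) * lam i - t * lam i * lam l = nu l * lam i by ring.
by apply: mulr_gt0 => //; apply: nupos.
Qed.


Lemma vertex_part G : facet (conv (range V)) G -> conv (G `|` [set a]) x0 ->
  exists i, conv (G `|` [set a]) = conv (range (Wk i)) /\
            vertex (conv (G `|` [set a])) a.
Proof.
move=> fG Cx0; have [i [Ge [lip _]]] := unq_part fG Cx0.
exists i; rewrite Ge W_conv; split=> //.
have := vertexV i (W_indep lip); by rewrite /Wk eqxx.
Qed.

Lemma x0_in_Lambda G : Lambda Ap d.+1 D (conv (G `|` [set a])) -> conv (G `|` [set a]) x0.
Proof. by move=> [V' [_ [_ [_ rel]]]]; apply: conv_rel; apply: rel. Qed.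

Lemma part1 : exists! G, facet (conv (range V)) G /\ Lambda Ap d.+1 D (conv (G `|` [set a])).
Proof.
have [k [lk amin]] := exist_part.
exists (conv (range (fun j => V (lift k j)))); split.
  by split; [apply: facet_simplex | apply: Lambda_part].
move=> G' [fG' LG'].
have [i [Gi [lii Hi]]] := unq_part fG' (x0_in_Lambda LG').
have fG : facet (conv (range V)) (conv (range (fun j => V (lift k j)))) by apply: facet_simplex.
have [i' [Gi' [lii' Hi']]] := unq_part fG (x0_in_Lambda (Lambda_part lk amin)).
rewrite Gi Gi'; case: (eqVneq i' i) => [-> //|ne].
have ne' : i != i' by move: ne; rewrite eq_sym.
have h1 := Hi' i ne' lii.
have h2 := Hi i' ne lii'.
by have := lt_trans h1 h2; rewrite ltxx.
Qed.

End WithA.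

Lemma core_result r (Delta : 'I_r -> set pt) (j : 'I_r) :
  (forall a, a \in Ap -> affc V a) ->
  (forall S, Lambda Ap d.+1 D S <-> exists i, S = Delta i) ->
  Delta j = conv (range V) ->
  (forall a, a \in Ap -> ~ vertex (Delta j) a ->
     exists! G, facet (Delta j) G /\ Lambda Ap d.+1 D (conv (G `|` [set a])))
  /\
  (exists phi : pt -> 'I_r,
     (forall a, a \in Ap -> ~ vertex (Delta j) a ->
        phi a != j /\
        exists G, facet (Delta j) G /\ Delta (phi a) = conv (G `|` [set a]))
     /\
     (forall a b, a \in Ap -> ~ vertex (Delta j) a ->
                  b \in Ap -> ~ vertex (Delta j) b ->
                  phi a = phi b -> a = b)).
Proof.
move=> HA HL Dj.
have P1 : forall a, a \in Ap -> exists! G, facet (Delta j) G /\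
     Lambda Ap d.+1 D (conv (G `|` [set a])).
  move=> a aA; have [lam [lam1 aE]] := HA a aA; rewrite Dj.
  exact: (part1 aA lam1 aE).
split; first by move=> a aA _; apply: P1.
have /choice [phi Hphi] : forall a, exists i, a \in Ap -> ~ vertex (Delta j) a ->
    exists G, facet (Delta j) G /\ Delta i = conv (G `|` [set a]).
  move=> a; have [aA|naA] := pselect (a \in Ap); last by exists j.
  have [G [[fG LG] _]] := P1 a aA.
  have [i Ei] := (proj1 (HL _)) LG.
  by exists i => _ _; exists G; split.
have vx : forall a, a \in Ap -> ~ vertex (Delta j) a ->
    exists i, Delta (phi a) = conv (range (Wk a i)) /\ vertex (Delta (phi a)) a.
  move=> a aA nv; have [G [fG EG]] := Hphi a aA nv.
  have [lam [lam1 aE]] := HA a aA.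
  have Lp : Lambda Ap d.+1 D (Delta (phi a)) by apply/HL; exists (phi a).
  rewrite Dj in fG; rewrite EG in Lp *.
  exact: (vertex_part aA lam1 aE fG (x0_in_Lambda Lp)).
exists phi; split.
  move=> a aA nv; split; last by apply: Hphi.
  apply/eqP => pj; have [i [_ va]] := vx a aA nv.
  by apply: nv; rewrite -pj.
move=> a b aA nva bA nvb pab.
have [ia [Ea va]] := vx a aA nva.
have [ib [Eb vb]] := vx b bA nvb.
rewrite pab Eb in va.
have [l al] := vertex_in va.
move: al; rewrite /Wk; case: eqP => // _ al.
by exfalso; apply: nva; rewrite Dj al; apply: vertexV.
Qed.

End Core.



Theorem lemma3p4 (R : realType) (n : nat) (Ap Am : seq 'rV[R]_n) (d : nat)
    (D : set 'rV[R]_n) (r : nat) (Delta : 'I_r -> set 'rV[R]_n) (j : 'I_r) :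
  (forall x, x \in Ap -> x \notin Am) ->
  nonseparable Ap Am ->
  affdim (conv (pts (Ap ++ Am))) d ->
  cellFd Ap d D -> pts Am `<=` D ->
  injective Delta ->
  (forall S, Lambda Ap d D S <-> exists i, S = Delta i) ->
  (forall a, a \in Ap -> ~ vertex (Delta j) a ->
     exists! G, facet (Delta j) G /\ Lambda Ap d D (conv (G `|` [set a])))
  /\
  (exists phi : 'rV[R]_n -> 'I_r,
     (forall a, a \in Ap -> ~ vertex (Delta j) a ->
        phi a != j /\
        exists G, facet (Delta j) G /\ Delta (phi a) = conv (G `|` [set a]))
     /\
     (forall a b, a \in Ap -> ~ vertex (Delta j) a ->
                  b \in Ap -> ~ vertex (Delta j) b ->
                  phi a = phi b -> a = b)).
Proof.
move=> _ _ [Sge Snot] [RC [DgeD DnotD]] _ _ HL.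
have [V [VA [Vind [DjE relDj]]]] : Lambda Ap d D (Delta j) by apply/HL; exists j.
set S := conv (pts (Ap ++ Am)) in Sge Snot.
have ApS : forall y, y \in Ap -> S y.
  by move=> y yA; apply: conv_sub; rewrite /pts /= mem_cat yA.
have DS : D `<=` S.
  move: (RC) => [_ [sigma [Hs HD]]] y; rewrite HD => /(_ (fun _ => 0)).
  have [c [b [_ [_ ->]]]] := Hs (fun _ => 0).
  by apply: conv_mono => z [zA _]; rewrite /pts /= mem_cat zA.
have VS : forall i, S (V i) by move=> i; apply: ApS.
case: d V VA Vind DjE relDj Sge Snot DgeD DnotD HL VS => [|d] V VA Vind DjE relDj Sge Snot DgeD DnotD HL VS.
  have aV : forall a, a \in Ap -> a = V ord0.
    move=> a aA; have [be [be1 ->]] := in_affc Vind VS Snot (ApS a aA).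
    have b0 : be ord0 = 1 by rewrite -be1 big_ord1.
    by rewrite /bary big_ord1 b0 scale1r.
  have vx : forall a, a \in Ap -> vertex (Delta j) a.
    by move=> a aA; rewrite (aV a aA) DjE; apply: vertexV.
  split; first by move=> a aA nv; exfalso; apply: nv; apply: vx.
  by exists (fun _ => j); split => [a aA nv|a b aA nv]; exfalso; apply: nv; apply: vx.
have [pD [pDin pDind]] := DgeD.
have HAff : forall y, y \in Ap -> affc pD y.
  by move=> y yA; apply: in_affc pDind (fun i => DS _ (pDin i)) Snot (ApS y yA).
have HAffV : forall y, D y -> affc V y.
  by move=> y Dy; apply: in_affc Vind VS Snot (DS _ Dy).
have cD : convexS D.
  move: (RC) => [_ [sigma [Hs HD]]] u v s; rewrite !HD => Du Dv s0 s1 w.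
  have [c [b [_ [_ E]]]] := Hs w.
  by move: (Du w) (Dv w); rewrite E => Cu Cv; apply: conv_convex.
have affD : aff D `<=` affc pD.
  by apply: aff_affc => y Dy; apply: in_affc pDind (fun i => DS _ (pDin i)) Snot (DS _ Dy).
have [x0 rx0] := relint_ex cD pDin pDind affD.
have : conv (range V) x0 by rewrite -DjE; apply: conv_rel; apply: relDj.
move=> /conv_range [mu [mu0 [mu1 x0E]]].
have HA : forall a, a \in Ap -> affc V a by move=> a aA; apply: in_affc Vind VS Snot (ApS a aA).
exact: (core_result RC pDin pDind HAff HAffV VA Vind rx0 mu0 mu1 x0E HA HL DjE).
Qed.
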